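(* Let $G$ be a finite, simple, connected graph without isolated vertices. Then Dom has a winning strategy in the Sepy-start Disjoint Domination Game played on $G$.
   Context: For a vertex $v$ of a graph $G$, $N[v]$ denotes its closed neighborhood ($v$ together with its neighbors). The Disjoint Domination Game on an isolate-free graph $G$ is played by two players, Dom and Sepy, with the color set $\{p,b\}$ (purple and blue). At any stage, $V_p$ and $V_b$ denote the sets of vertices colored $p$ and $b$, respectively, and for a color $c$ we write $\bar c$ for the other color. The players alternately make moves; either player may use either color. A move consists of choosing a vertex $v$ and a color $c\in\{p,b\}$ such that (i) $v$ is not yet colored, and (ii) there is a vertex $u\in N[v]$ with $N[u]\cap V_c=\emptyset$ (evaluated before the move); then $v$ receives color $c$. A player must make a legal move on his turn (no passing). The game terminates as soon as one of the following holds: (s* ) some vertex $v$ has a monochromatic closed neighborhood, i.e. $N[v]\subseteq V_p$ or $N[v]\subseteq V_b$ — then Sepy wins; (d* ) both $V_p$ and $V_b$ are dominating sets of $G$ — then Dom wins. In the Sepy-start game, Sepy makes the first move. *)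

(* Defs.v *)
From mathcomp Require Import all_boot.
Set Implicit Arguments. Unset Strict Implicit. Unset Printing Implicit Defensive.

Definition simple_graph (T : finType) (e : rel T) : Prop :=
  symmetric e /\ irreflexive e.

Definition cnbhd (T : finType) (e : rel T) (v : T) : {set T} :=
  [set u | (u == v) || e v u].

Definition connected_graph (T : finType) (e : rel T) : Prop :=
  forall x y : T, connect e x y.

Definition isolate_free (T : finType) (e : rel T) : Prop :=
  forall v : T, exists u : T, e v u.

(* Colours: true = purple (p), false = blue (b).
   A position: each vertex is uncoloured (None) or coloured (Some c). *)
Definition coloring (T : finType) := {ffun T -> option bool}.

Definition init_coloring (T : finType) : coloring T := [ffun _ => None].

Definition sepy_cond (T : finType) (e : rel T) (f : coloring T) : Prop :=
  exists v : T, exists c : bool, forall u, u \in cnbhd e v -> f u = Some c.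

Definition dominating_color (T : finType) (e : rel T) (f : coloring T)
  (c : bool) : Prop :=
  forall v : T, exists2 u, u \in cnbhd e v & f u = Some c.

Definition dom_cond (T : finType) (e : rel T) (f : coloring T) : Prop :=
  dominating_color e f true /\ dominating_color e f false.

Definition legal_move (T : finType) (e : rel T) (f : coloring T)
  (v : T) (c : bool) : Prop :=
  f v = None /\
  exists2 u, u \in cnbhd e v & forall w, w \in cnbhd e u -> f w <> Some c.

Definition play (T : finType) (f : coloring T) (v : T) (c : bool)
  : coloring T := [ffun x => if x == v then Some c else f x].

(* dom_wins e f t : from position f with Dom to move iff t = true,
   Dom has a winning strategy.  The game stops as soon as [s*] or [d*]
   holds; [s*] means Sepy wins.  A player must move (no passing); a
   non-terminal position with no legal move is (conservatively) not
   counted as a Dom win (such positions cannot actually occur). *)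
Inductive dom_wins (T : finType) (e : rel T) : coloring T -> bool -> Prop :=
| dom_wins_end f t :
    ~ sepy_cond e f -> dom_cond e f -> dom_wins e f t
| dom_wins_dom_turn f :
    ~ sepy_cond e f -> ~ dom_cond e f ->
    (exists v c, legal_move e f v c /\ dom_wins e (play f v c) false) ->
    dom_wins e f true
| dom_wins_sepy_turn f :
    ~ sepy_cond e f -> ~ dom_cond e f ->
    (exists v c, legal_move e f v c) ->
    (forall v c, legal_move e f v c -> dom_wins e (play f v c) true) ->
    dom_wins e f false.

(* Main.v *)
Require Import Defs.
From mathcomp Require Import all_boot.
From Stdlib Require Import Classical.
Set Implicit Arguments. Unset Strict Implicit.

Definition sees (T : finType) (e : rel T) (f : coloring T) (x : T) (c : bool) : Prop :=
  exists2 u, u \in cnbhd e x & f u = Some c.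

Definition Inv (T : finType) (e : rel T) (f : coloring T) : Prop :=
  forall x c, f x = Some c -> sees e f x true /\ sees e f x false.

Lemma in_cn (T : finType) (e : rel T) u v : (u \in cnbhd e v) = (u == v) || e v u.
Proof. by rewrite /cnbhd inE. Qed.

Lemma cn_sym (T : finType) (e : rel T) u v : symmetric e ->
  (u \in cnbhd e v) = (v \in cnbhd e u).
Proof. by move=> sym; rewrite !in_cn eq_sym sym. Qed.

Lemma playE (T : finType) (f : coloring T) v c x :
  play f v c x = if x == v then Some c else f x.
Proof. by rewrite /play ffunE. Qed.

Lemma sees_play (T : finType) e (f : coloring T) v c x d :
  f v = None -> sees e f x d -> sees e (play f v c) x d.
Proof.
move=> fv [u Hu fu]; exists u => //; rewrite playE.
case: eqP => // Euv; subst u; by rewrite fv in fu.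
Qed.

Lemma sees_self (T : finType) e (f : coloring T) x c : f x = Some c -> sees e f x c.
Proof. by move=> fx; exists x => //; rewrite in_cn eqxx. Qed.

Lemma both (T : finType) e (f : coloring T) x c :
  sees e f x c -> sees e f x (~~ c) -> sees e f x true /\ sees e f x false.
Proof. by case: c. Qed.

Lemma not_mono (T : finType) e (f : coloring T) v col :
  sees e f v true -> sees e f v false ->
  (forall u, u \in cnbhd e v -> f u = Some col) -> False.
Proof.
move=> [u1 Hu1 f1] [u2 Hu2 f2] H.
move: (H _ Hu1) (H _ Hu2); rewrite f1 f2; case=> <-; discriminate.
Qed.

Lemma inv_nosepy (T : finType) e (f : coloring T) : Inv e f -> ~ sepy_cond e f.
Proof.
move=> I [v [c H]].
have fv : f v = Some c by apply: H; rewrite in_cn eqxx.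
have [H1 H2] := I _ _ fv; exact: not_mono H1 H2 H.
Qed.

Lemma missing (T : finType) e (f : coloring T) :
  ~ dom_cond e f -> exists c v, ~ sees e f v c.
Proof.
move=> ND; apply: NNPP => H; apply: ND; split => v; apply: NNPP => Hn; apply: H;
  by [exists true, v | exists false, v].
Qed.

Lemma exists_legal (T : finType) e (f : coloring T) : symmetric e ->
  ~ sepy_cond e f -> ~ dom_cond e f -> exists v c, legal_move e f v c.
Proof.
move=> sym NS ND.
have [c [v Hv]] := missing ND.
have [w [Hw fw]] : exists w, w \in cnbhd e v /\ f w = None.
  apply: NNPP => H; apply: NS; exists v, (~~ c) => u Hu.
  case fu: (f u) => [d|]; last by exfalso; apply: H; exists u.
  case: (eqVneq d c) => [Edc|Ndc]; first by exfalso; apply: Hv; exists u; rewrite // fu Edc.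
  by congr Some; move: Ndc; clear; by case: d; case: c.
exists w, c; split => //; exists v; first by rewrite cn_sym.
by move=> x Hx fx; apply: Hv; exists x.
Qed.

Lemma crossing (T : finType) (e : rel T) (U : {set T}) x y :
  connect e x y -> x \notin U -> y \in U ->
  exists a b, [/\ e a b, a \notin U & b \in U].
Proof.
move=> /connectP [p Hp Ey]; elim: p x Hp Ey => [|z p IH] x /= Hp Ey Hx Hy.
  by subst y; rewrite Hy in Hx.
case/andP: Hp => exz Hp.
case: (boolP (z \in U)) => Hz; first by exists x, z.
exact: IH Hp Ey Hz Hy.
Qed.

Lemma good_move (T : finType) e (f : coloring T) z : symmetric e -> connected_graph e ->
  Inv e f -> f z <> None -> ~ dom_cond e f ->
  exists y d, [/\ legal_move e f y d, f y = None & sees e f y (~~ d)].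
Proof.
move=> sym conn I fz ND.
have [c [v Hv]] := missing ND.
have fv : f v = None.
  case fv: (f v) => [d|] //; exfalso; apply: Hv; have := I _ _ fv; by case: c => [][].
case: (classic (sees e f v (~~ c))) => Hvc.
  exists v, c; split => //; split => //; exists v; first by rewrite in_cn eqxx.
  by move=> x Hx fx; apply: Hv; exists x.
pose U := [set x | [forall u in cnbhd e x, f u == None]].
have vU : v \in U.
  rewrite inE; apply/forall_inP => u Hu; case fu: (f u) => [d|] //.
  exfalso; case: (eqVneq d c) => [E|N]; [apply: Hv | apply: Hvc]; exists u => //; rewrite fu ?E //.
  by congr Some; move: N; clear; by case: d; case: c.
have zU : z \notin U.
  rewrite inE; apply/forall_inP => H; apply: fz; apply/eqP; apply: H; by rewrite in_cn eqxx.
have [a [b [eab aU bU]]] := crossing (conn z v) zU vU.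
have bN : forall x, x \in cnbhd e b -> f x = None.
  by move=> x Hx; move: bU; rewrite inE => /forall_inP /(_ x Hx) /eqP.
have fa : f a = None by apply: bN; rewrite in_cn sym eab orbT.
have [u Hu fu] : exists2 u, u \in cnbhd e a & f u != None.
  move: aU; rewrite inE negb_forall_in => /existsP [u /andP [Hu fu]]; by exists u.
case fu': (f u) fu => [d0|] // _.
case: (classic (sees e f a (~~ d0))) => Ha.
  exists a, d0; split => //; split => //; exists b; first by rewrite in_cn eab orbT.
  by move=> x Hx; rewrite bN.
exists (a), (~~ d0); split => //; first split => //.
  exists a; first by rewrite in_cn eqxx.
  by move=> x Hx fx; apply: Ha; exists x.
by rewrite negbK; exists u.
Qed.

Lemma ucard (T : finType) (f : coloring T) w c : f w = None ->
  #|[set x | play f w c x == None]| < #|[set x | f x == None]|.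
Proof.
move=> fw; apply: proper_card; apply/properP; split.
  apply/subsetP => x; rewrite !inE playE; by case: (x =P w).
by exists w; rewrite !inE ?playE ?eqxx ?fw.
Qed.

Lemma main (T : finType) (e : rel T) : simple_graph e -> connected_graph e -> isolate_free e ->
  forall n (f : coloring T), #|[set x | f x == None]| < n -> Inv e f -> dom_wins e f false.
Proof.
move=> [sym irr] conn isof; elim=> [|n IH] f // Hn I.
have NS := inv_nosepy I.
case: (classic (dom_cond e f)) => DC; first exact: dom_wins_end.
apply: dom_wins_sepy_turn => //; first exact: exists_legal.
move=> w c [fw [u Hu Hleg]].
set g := play f w c.
have gw : g w = Some c by rewrite /g playE eqxx.
have Hg : #|[set x | g x == None]| < #|[set x | f x == None]| := ucard c fw.
have gother : forall x d, x != w -> g x = Some d -> f x = Some d.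
  by move=> x d Nxw; rewrite /g playE (negbTE Nxw).
have liftg : forall x d, sees e f x d -> sees e g x d by move=> x d; apply: sees_play.
case: (classic (sees e g w (~~ c))) => Hs.
- have Ig : Inv e g.
    move=> x d gx; case: (eqVneq x w) => [->|Nxw]; first exact: both (sees_self e gw) Hs.
    have [H1 H2] := I _ _ (gother _ _ Nxw gx); split; exact: liftg.
  have NSg := inv_nosepy Ig.
  case: (classic (dom_cond e g)) => DCg; first exact: dom_wins_end.
  apply: dom_wins_dom_turn => //.
  have [|y [d [Hl gy Hsy]]] := good_move (z:=w) sym conn Ig _ DCg; first by rewrite gw.
  exists y, d; split => //; apply: IH.
    apply: leq_trans (ucard d gy) _; apply: ltnW; apply: leq_trans Hg _; exact: Hn.
  move=> x d' hx; move: hx; rewrite playE; case: (eqVneq x y) => [->|Nxy] hx.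
    apply: (@both _ _ _ _ d); first by apply: sees_self; rewrite playE eqxx.
    exact: sees_play.
  have [H1 H2] := Ig _ _ hx; split; exact: sees_play.
- have Hall : forall x, x \in cnbhd e w -> g x <> Some (~~ c).
    by move=> x Hx gx; apply: Hs; exists x.
  have gcol : forall x, x \in cnbhd e w -> g x <> None -> g x = Some c.
    move=> x Hx; case gx: (g x) => [d|] // _; congr Some.
    case: (eqVneq d c) => // Ndc; exfalso; apply: (Hall x Hx); rewrite gx; congr Some.
    by move: Ndc; clear; case: d; case: c.
  have [y [Hy gy]] : exists y, y \in cnbhd e w /\ g y = None.
    apply: NNPP => H.
    have gc : forall x, x \in cnbhd e w -> g x = Some c.
      by move=> x Hx; apply: gcol => // gx; apply: H; exists x.
    case: (eqVneq u w) => [Euw|Nuw].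
      subst u; have [z ewz] := isof w.
      have Nzw : z != w by apply/eqP => Ezw; subst z; rewrite irr in ewz.
      have Hz : z \in cnbhd e w by rewrite in_cn ewz orbT.
      exact: Hleg Hz (gother _ _ Nzw (gc _ Hz)).
    have Hu' := Hu.
    have [H1 H2] := I _ _ (gother _ _ Nuw (gc _ Hu')).
    have [x Hx fx] : sees e f u c by move: H1 H2; case: (c) => A B.
    exact: Hleg Hx fx.
  have Nyw : y != w by apply/eqP => Eyw; subst y; rewrite gw in gy.
  have NSg : ~ sepy_cond e g.
    move=> [v [col Hv]].
    case: (eqVneq v w) => [Evw|Nvw].
      subst v; by rewrite (Hv _ Hy) in gy.
    have gv : g v = Some col by apply: Hv; rewrite in_cn eqxx.
    have [H1 H2] := I _ _ (gother _ _ Nvw gv).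
    exact: not_mono (liftg _ _ H1) (liftg _ _ H2) Hv.
  case: (classic (dom_cond e g)) => DCg; first exact: dom_wins_end.
  apply: dom_wins_dom_turn => //.
  set h := play g y (~~ c).
  have hy : h y = Some (~~ c) by rewrite /h playE eqxx.
  have hw : h w = Some c by rewrite /h playE eq_sym (negbTE Nyw).
  exists y, (~~ c); split.
    split => //; exists w; first by rewrite (cn_sym _ _ sym).
    exact: Hall.
  apply: IH.
    apply: leq_trans (ucard (~~ c) gy) _; apply: ltnW; apply: leq_trans Hg _; exact: Hn.
  move=> x d' hx; move: hx; rewrite playE; case: (eqVneq x y) => [->|Nxy] hx.
    apply: (@both _ _ _ _ c); last exact: sees_self.
    by exists w => //; rewrite (cn_sym _ _ sym).
  case: (eqVneq x w) => [->|Nxw].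
    apply: (@both _ _ _ _ c); first exact: sees_self.
    by exists y.
  have [H1 H2] := I _ _ (gother _ _ Nxw hx); split; apply: sees_play => //; exact: liftg.
Qed.

Theorem theorem3 (T : finType) (e : rel T) :
  simple_graph e -> connected_graph e -> isolate_free e ->
  dom_wins e (init_coloring T) false.
Proof.
move=> sg conn isof.
apply: (main sg conn isof (n := #|[set x | init_coloring T x == None]|.+1)) => //.
by move=> x c; rewrite /init_coloring ffunE.
Qed.
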